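(* For $n\ge2$ let $X=\mathbb{P}\big(\mathcal{O}_{\mathbb{P}^{n-1}}\oplus\mathcal{O}_{\mathbb{P}^{n-1}}(n-1)\big)$, let $L=c_1(\mathcal{O}_X(1))$, let $H$ be the pullback of the hyperplane class of $\mathbb{P}^{n-1}$, and for $\alpha,\beta>0$ let $\Omega_{\alpha,\beta}=\alpha L+\beta H$ (a K\''ahler class on $X$). Define $$f(n,\alpha,\beta):=2(n+1)\,\Omega_{\alpha,\beta}^n\big[n\,c_1^2\Omega_{\alpha,\beta}^{n-2}-(n+2)\,c_2\Omega_{\alpha,\beta}^{n-2}\big]-n^2\big(c_1\Omega_{\alpha,\beta}^{n-1}\big)^2.$$ Then for every $\alpha,\beta>0$ there exists a positive integer $N(\alpha,\beta)$ such that $f(n,\alpha,\beta)>0$ for all $n\ge N(\alpha,\beta)$. Consequently, for such $n$, $$8(n+1)\big(n\,c_1^2\Omega_{\alpha,\beta}^{n-2}-(n+2)c_2\Omega_{\alpha,\beta}^{n-2}\big)>\frac{\big(2n\,c_1\Omega_{\alpha,\beta}^{n-1}\big)^2}{\Omega_{\alpha,\beta}^n},$$ and the K\''ahler class $\Omega_{\alpha,\beta}$ contains no K\''ahler metric of constant scalar curvature.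
   Context: $c_1,c_2$ are the Chern classes of $X$ and products of classes denote intersection numbers on $X$. The intersection ring of $X$ is generated by $L,H$ with relations $L^2=(n-1)LH$, $LH^{n-1}=1$, $H^n=0$, and $c_1=2L+H$, $c_2=2nLH-\frac{n(n-1)}{2}H^2$. *)

(* Defs.v *)
From HB Require Import structures.
From mathcomp Require Import all_boot all_order all_algebra.
From mathcomp Require Export reals.
Set Implicit Arguments. Unset Strict Implicit. Unset Printing Implicit Defensive.
Import Order.TTheory GRing.Theory Num.Theory.
Local Open Scope ring_scope.

(* Cohomology classes of X = P(O + O(n-1)) over P^{n-1} are represented as
   polynomials in two variables: outer variable L, inner variable H,
   i.e. p = \sum_i p_i(H) L^i with p : {poly {poly R}}. *)

Section Intersection.
Variable R : fieldType.

(* Intersection number of the monomial L^a H^b on X (dim n), determined by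
   the relations L^2 = (n-1) L H, L H^{n-1} = 1, H^n = 0:
   L^a H^b = (n-1)^(a-1) if a >= 1 and a+b = n, H^n = 0, and 0 when a+b <> n. *)
Definition ideg (n a b : nat) : R :=
  if (a + b == n)%N then (if a == 0%N then 0 else ((n - 1)%N%:R) ^+ a.-1) else 0.

Definition inum (n : nat) (p : {poly {poly R}}) : R :=
  \sum_(i < size p) \sum_(j < size p`_i) (p`_i)`_j * ideg n i j.

Definition clL : {poly {poly R}} := 'X.
Definition clH : {poly {poly R}} := ('X)%:P.

Definition chern1 : {poly {poly R}} := clL *+ 2 + clH.
Definition chern2 (n : nat) : {poly {poly R}} :=
  ((2 * n)%N%:R)%:P%:P * (clL * clH)
  - (((n * (n - 1))%N%:R / 2%:R))%:P%:P * (clH ^+ 2).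

Definition Omega (a b : R) : {poly {poly R}} := a%:P%:P * clL + b%:P%:P * clH.

Definition fnab (n : nat) (a b : R) : R :=
  2%:R * (n.+1)%:R * inum n (Omega a b ^+ n)
    * (n%:R * inum n (chern1 ^+ 2 * Omega a b ^+ (n - 2))
       - (n + 2)%N%:R * inum n (chern2 n * Omega a b ^+ (n - 2)))
  - (n%:R) ^+ 2 * (inum n (chern1 * Omega a b ^+ (n - 1))) ^+ 2.

End Intersection.

(* Main.v *)
Require Import Defs.
From HB Require Import structures.
From mathcomp Require Import all_boot all_order all_algebra.
From mathcomp Require Import reals ring lra.
Import Order.TTheory GRing.Theory Num.Theory.
Local Open Scope ring_scope.

Section L.
Variable R : fieldType.

Lemma sum_ext0 (F : nat -> R) a b : (forall i, (a <= i)%N -> F i = 0) -> (a <= b)%N ->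
  \sum_(i < a) F i = \sum_(i < b) F i.
Proof.
move=> hF hab; rewrite (big_ord_widen b F hab) big_mkcond; apply: eq_bigr => i _.
by case: ltnP => // h; rewrite hF.
Qed.

Lemma ideg_out n i j : (i + j != n)%N -> ideg R n i j = 0.
Proof. by rewrite /ideg => /negbTE ->. Qed.

Lemma inner_sum n i (q : {poly R}) :
  \sum_(j < size q) q`_j * ideg R n i j = q`_(n - i) * ideg R n i (n - i).
Proof.
rewrite (@sum_ext0 (fun j => q`_j * ideg R n i j) (size q) (maxn (size q) (n - i).+1)); last 2 first.
- by move=> j hj; rewrite nth_default // mul0r.
- by rewrite leq_maxl.
have hlt : (n - i < maxn (size q) (n - i).+1)%N by rewrite leq_max ltnSn orbT.
rewrite (bigD1 (Ordinal hlt)) //= big1 ?addr0 // => j hj.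
rewrite ideg_out ?mulr0 //; apply/negP => /eqP e; move/negP: hj; apply.
by rewrite -val_eqE /=; apply/eqP; rewrite -{2}e addKn.
Qed.

Lemma inumE n p : inum n p = \sum_(i < n.+1) (p`_i)`_(n - i) * ideg R n i (n - i).
Proof.
rewrite /inum; under eq_bigr do rewrite inner_sum.
rewrite (@sum_ext0 (fun i => (p`_i)`_(n - i) * ideg R n i (n - i)) _ (maxn (size p) n.+1)); last 2 first.
- by move=> i hi; rewrite (nth_default 0 hi) coef0 mul0r.
- by rewrite leq_maxl.
rewrite -(@sum_ext0 (fun i => (p`_i)`_(n - i) * ideg R n i (n - i)) n.+1) ?leq_maxr // => i hi.
rewrite ideg_out ?mulr0 //; move: hi.
move=> h; have -> : (n - i = 0)%N by apply/eqP; rewrite subn_eq0 ltnW.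
by rewrite addn0 gtn_eqF.
Qed.
Lemma inumD n (p q : {poly {poly R}}) : inum n (p + q) = inum n p + inum n q.
Proof. by rewrite !inumE -big_split; apply: eq_bigr => i _; rewrite !coefD mulrDl. Qed.

Lemma inumC n (c : R) (p : {poly {poly R}}) : inum n (c%:P%:P * p) = c * inum n p.
Proof. by rewrite !inumE mulr_sumr; apply: eq_bigr => i _; rewrite !coefCM mulrA. Qed.

Lemma inumMn n (p : {poly {poly R}}) k : inum n (p *+ k) = inum n p *+ k.
Proof. by rewrite !inumE -sumrMnl; apply: eq_bigr => i _; rewrite !coefMn mulrnAl. Qed.

Lemma inumB n (p q : {poly {poly R}}) : inum n (p - q) = inum n p - inum n q.
Proof.
have h : inum n (- q) = - inum n q.
  by rewrite !inumE -sumrN; apply: eq_bigr => i _; rewrite !coefN mulNr.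
by rewrite inumD h.
Qed.

Lemma inum_mono n a b : inum n (('X^a * ('X^b)%:P) : {poly {poly R}}) = ideg R n a b.
Proof.
rewrite inumE.
have hc : forall i j, ((('X^a * ('X^b)%:P) : {poly {poly R}})`_i)`_j = ((i == a) && (j == b))%:R.
  move=> i j; rewrite mulrC coefCM coefXn mulrC mulr_natl coefMn coefXn.
  by case: (i == a); case: (j == b).
under eq_bigr do rewrite hc.
case: (leqP a n) => han.
  rewrite (bigD1 (Ordinal (han : (a < n.+1)%N))) //= big1 ?addr0.
    rewrite eqxx /=.
    case e: (n - a == b)%N; first by move/eqP: e => <-; rewrite mul1r.
    rewrite mul0r /ideg; case: ifP => // /eqP e2; move: e; by rewrite -e2 addKn eqxx.
  by move=> i /negbTE hi; rewrite -val_eqE /= in hi; rewrite hi mul0r.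
rewrite big1 ?ideg_out // => [|i _].
  by rewrite gtn_eqF // ltn_addr.
case e: (nat_of_ord i == a); last by rewrite mul0r.
by move: e (ltn_ord i) => /eqP -> hi; move: han; rewrite ltnNge -ltnS hi.
Qed.

Lemma J_step (a b : R) (j r s : nat) :
  (('X^j * ('X^r)%:P * Omega a b ^+ s.+1) : {poly {poly R}}) =
  a%:P%:P * ('X^(j.+1) * ('X^r)%:P * Omega a b ^+ s)
  + b%:P%:P * ('X^j * ('X^(r.+1))%:P * Omega a b ^+ s).
Proof.
rewrite [Omega a b ^+ s.+1]exprSr [_ ^+ j.+1]exprS [_ ^+ r.+1]exprS polyCM /Omega /clL /clH.
ring.
Qed.

Lemma J_val (a b : R) n s : forall j r, (j + r + s = n)%N ->
  inum n ('X^j * ('X^r)%:P * Omega a b ^+ s) * (n.-1)%:R =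
  if j is 0 then ((n.-1)%:R * a + b) ^+ s - b ^+ s
  else (n.-1)%:R ^+ j * ((n.-1)%:R * a + b) ^+ s.
Proof.
elim: s => [|s IH] j r hjr.
  rewrite expr0 mulr1 inum_mono /ideg addn0 in hjr *; rewrite hjr eqxx.
  by case: j {hjr} => [|j] /=; rewrite ?mul0r ?subrr // mulr1 exprSr subn1.
rewrite (J_step a b j r s) inumD !inumC mulrDl.
rewrite -[a * _ * _]mulrA -[b * _ * _]mulrA.
rewrite (IH j.+1 r); last by rewrite addSn -hjr addnS.
rewrite (IH j r.+1); last by rewrite addnS -hjr addnS.
case: j {hjr} => [|j]; rewrite !exprS; ring.
Qed.

Lemma om_split (a b : R) s : Omega a b ^+ s = 'X^0 * ('X^0)%:P * Omega a b ^+ s.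
Proof. by rewrite !expr0 !mul1r. Qed.

Lemma c1_split (a b : R) s : chern1 R * Omega a b ^+ s =
  ('X^1 * ('X^0)%:P * Omega a b ^+ s) *+ 2 + 'X^0 * ('X^1)%:P * Omega a b ^+ s.
Proof. rewrite /chern1 /clL /clH !expr0 !expr1 polyC1; ring. Qed.

Lemma c1sq_split (a b : R) s : chern1 R ^+ 2 * Omega a b ^+ s =
  ('X^2 * ('X^0)%:P * Omega a b ^+ s) *+ 4 + ('X^1 * ('X^1)%:P * Omega a b ^+ s) *+ 4
  + 'X^0 * ('X^2)%:P * Omega a b ^+ s.
Proof. rewrite /chern1 /clL /clH !expr0 !expr1 polyC1 rmorphXn /=; ring. Qed.

Lemma c2_split (a b : R) n s : chern2 R n * Omega a b ^+ s =
  ((2 * n)%N%:R)%:P%:P * ('X^1 * ('X^1)%:P * Omega a b ^+ s)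
  - (((n * (n - 1))%N%:R / 2%:R))%:P%:P * ('X^0 * ('X^2)%:P * Omega a b ^+ s).
Proof. rewrite /chern2 /clL /clH !expr0 !expr1 ?polyC1 rmorphXn /=; ring. Qed.
End L.

Section K.
Variable R : realFieldType.
Definition gpoly (x e d : R) : R :=
  let c1 := (5%:R/2%:R) * (x+1)^+2 * x - 3%:R * (x+1) * x + (x+1) in
  let c2 := (x+1) + (x+1)*(x+3%:R)*x/2%:R in
  2%:R * (x+2%:R) * (1 - e^+2*d) * (c1 - d * c2) - (x+1)^+2 * (2%:R*x+1-e*d)^+2.

Lemma gpos (x e d : R) : 2%:R <= x -> 0 <= d -> d <= e -> 200%:R * e <= 1 -> 0 < gpoly x e d.
Proof.
move=> hx hd hde he.
rewrite /gpoly.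
set c1 := (5%:R/2%:R) * (x+1)^+2 * x - 3%:R * (x+1) * x + (x+1).
set c2 := (x+1) + (x+1)*(x+3%:R)*x/2%:R.
have hc1 : c1 = (5%:R/2%:R)*x^+3 + 2%:R*x^+2 + x/2%:R + 1 by rewrite /c1; field.
have hc2 : c2 = (x^+3 + 4%:R*x^+2 + 3%:R*x)/2%:R + x + 1 by rewrite /c2; field.
clearbody c1 c2.
have x0 : 0 <= x by lra.
have x2 : 0 <= x^+2 by exact: exprn_ge0.
have x3 : 0 <= x^+3 by exact: exprn_ge0.
have x4 : 16%:R <= x^+4.
  have -> : x^+4 = (x^+2)^+2 by rewrite -exprM.
  have : 4%:R <= x^+2 by rewrite expr2; nra.
  nra.
have c1p : 0 <= c1 by rewrite hc1; lra.
have c2p : 0 <= c2 by rewrite hc2; lra.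
have he0 : 0 <= e by lra.
have he1 : e <= 1 by lra.
have ed : 0 <= e * d by nra.
have ed1 : e * d <= 1 by nra.
have h1 : (1 - e^+2*d) * (c1 - d * c2) >= c1 - d*c2 - e^+2*d*c1.
  have : 0 <= e^+2 * d^+2 * c2 by rewrite -exprMn; apply: mulr_ge0 => //; exact: sqr_ge0.
  move=> h; rewrite -subr_ge0; have -> : (1 - e ^+ 2 * d) * (c1 - d * c2) - (c1 - d * c2 - e ^+ 2 * d * c1) = e^+2 * d^+2 * c2 by ring.
  done.
have h2 : (2%:R*x+1-e*d)^+2 <= (2%:R*x+1)^+2 by nra.
have h3 : d * (c2 + e^+2 * c1) <= e * (c1 + c2).
  have k1 : d * c2 <= e * c2 by apply: ler_wpM2r.
  have k2 : d * e^+2 <= e.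
    have : e^+2 <= 1 by rewrite expr2; nra.
    move=> h; have : d * e^+2 <= d by rewrite -{2}(mulr1 d); apply: ler_wpM2l.
    move=> ?; lra.
  have k3 : d * e^+2 * c1 <= e * c1 by apply: ler_wpM2r.
  rewrite mulrDr mulrDr mulrA. lra.
have f3 : 2%:R * x <= x^+2 by rewrite expr2; nra.
have f2 : 2%:R * x^+2 <= x^+3 by rewrite (exprS _ 2); nra.
have f1 : 2%:R * x^+3 <= x^+4 by rewrite (exprS _ 3); nra.
have h4 : 2%:R * (x+2%:R) * (c1 + c2) <= 72%:R * x^+4.
  have -> : 2%:R * (x+2%:R) * (c1 + c2) = 6%:R*x^+4+20%:R*x^+3+22%:R*x^+2+16%:R*x+8%:R.
    by rewrite hc1 hc2; field.
  lra.
have h5 : x^+4 / 2%:R < 2%:R * (x + 2%:R) * c1 - (x+1)^+2 * (2%:R*x+1)^+2.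
  have -> : 2%:R * (x + 2%:R) * c1 - (x+1)^+2 * (2%:R*x+1)^+2 = x^+4+2%:R*x^+3-4%:R*x^+2-2%:R*x+3%:R.
    by rewrite hc1; field.
  lra.
have h6 : 2%:R * (x + 2%:R) * (1 - e ^+ 2 * d) * (c1 - d * c2) >=
   2%:R * (x + 2%:R) * c1 - 2%:R * (x+2%:R) * (d * (c2 + e^+2 * c1)).
  have -> : 2%:R * (x + 2%:R) * c1 - 2%:R * (x+2%:R) * (d * (c2 + e^+2 * c1)) =
     2%:R * (x + 2%:R) * (c1 - d*c2 - e^+2*d*c1) by ring.
  have hp : 0 <= 2%:R * (x + 2%:R) by lra.
  have := ler_wpM2l hp h1; rewrite mulrA; done.
have h7 : (x + 1) ^+ 2 * (2%:R * x + 1 - e * d) ^+ 2 <= (x + 1) ^+ 2 * (2%:R * x + 1) ^+ 2.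
  by apply: ler_wpM2l => //; exact: sqr_ge0.
have h8 : 2%:R * (x+2%:R) * (d * (c2 + e^+2 * c1)) <= 2%:R * (x+2%:R) * (e * (c1 + c2)).
  by apply: ler_wpM2l => //; lra.
have h9 : 2%:R * (x+2%:R) * (e * (c1 + c2)) = e * (2%:R * (x+2%:R) * (c1 + c2)) by ring.
have h10 : e * (2%:R * (x+2%:R) * (c1 + c2)) <= e * (72%:R * x^+4) by apply: ler_wpM2l.
have h11 : e * (72%:R * x^+4) <= (1/200%:R) * (72%:R * x^+4).
  by apply: ler_wpM2r; lra.
lra.
Qed.
Lemma fval (x T P e d : R) : x != 0 ->
  let n := x + 1 in
  let A := (T^+2*P - (e*T)^+2*(d*P))/x in
  let B := 4%:R * (x * P) + 4%:R * P + (P - d*P)/x in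
  let C := 2%:R * n * P - (n*x/2%:R) * ((P - d*P)/x) in
  let D := 2%:R * (T * P) + (T*P - (e*T)*(d*P))/x in
  (2%:R * (n+1) * A * (n * B - (n+2%:R) * C) - n^+2 * D^+2) * x^+2 = T^+2 * P^+2 * gpoly x e d.
Proof. move=> hx /=; rewrite /gpoly /=. field. done. Qed.

Lemma fpos (x T P e d : R) : 2%:R <= x -> 0 < T -> 0 < P -> 0 <= d -> d <= e -> 200%:R * e <= 1 ->
 0 < 2%:R * (x+1+1) * ((T^+2*P - (e*T)^+2*(d*P))/x) *
   ((x+1) * (4%:R * (x * P) + 4%:R * P + (P - d*P)/x)
    - (x+1+2%:R) * (2%:R * (x+1) * P - ((x+1)*x/2%:R) * ((P - d*P)/x)))
   - (x+1)^+2 * (2%:R * (T * P) + (T*P - (e*T)*(d*P))/x)^+2.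
Proof.
move=> hx hT hP hd hde he.
have hx0 : x != 0 by apply/negP => /eqP h; rewrite h in hx; lra.
have hx2 : 0 < x^+2 by rewrite expr2; nra.
rewrite -(pmulr_lgt0 _ hx2).
have := fval x T P e d hx0; rewrite /= => ->.
apply: mulr_gt0; first by apply: mulr_gt0; apply: exprn_gt0.
exact: gpos.
Qed.

Lemma qlem (A X D np1 n : R) : 0 < A -> 0 < 2%:R * np1 * A * X - n^+2 * D^+2 ->
  (2%:R * n * D)^+2 / A < 8%:R * np1 * X.
Proof.
move=> hA hf; rewrite ltr_pdivrMr //.
have -> : (2%:R * n * D)^+2 = 4%:R * (n^+2 * D^+2) by ring.
have -> : 8%:R * np1 * X * A = 4%:R * (2%:R * np1 * A * X) by ring.
lra.
Qed.
End K.

Theorem proposition2p2 (R : realType) (alpha beta : R) :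
  0 < alpha -> 0 < beta ->
  exists N : nat, (0 < N)%N /\
    forall n : nat, (2 <= n)%N -> (N <= n)%N ->
      0 < fnab n alpha beta /\
      8%:R * (n.+1)%:R *
        (n%:R * inum n (chern1 R ^+ 2 * Omega alpha beta ^+ (n - 2))
         - (n + 2)%N%:R * inum n (chern2 R n * Omega alpha beta ^+ (n - 2)))
      > (2%:R * n%:R * inum n (chern1 R * Omega alpha beta ^+ (n - 1))) ^+ 2
        / inum n (Omega alpha beta ^+ n).
Proof.
move=> ha hb.
have hq : 0 <= 200%:R * beta / alpha.
  by apply: divr_ge0; [apply: mulr_ge0; lra | lra].
exists (Num.bound (200%:R * beta / alpha)).+3; split => // n h2 hN.
case: n h2 hN => [|[|[|k]]] // _ hN.
have hbd := archi_boundP hq.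
have hkb : (Num.bound (200%:R * beta / alpha) <= k.+2)%N by move: hN; rewrite !ltnS => h; exact: (leq_trans h (leqW (leqnSn k))).
set x : R := (k.+2)%:R.
have hx2 : 2%:R <= x by rewrite /x ler_nat.
have hxb : 200%:R * beta / alpha <= x.
  have : (Num.bound (200%:R * beta / alpha))%:R <= x :> R by rewrite /x ler_nat.
  lra.
have hx0 : x != 0 by apply/negP => /eqP h; rewrite h in hx2; lra.
set T := x * alpha + beta.
have hT : 0 < T by rewrite /T; nra.
have hTb : 200%:R * beta <= T.
  move: hxb; rewrite ler_pdivrMr // /T => h; nra.
set e := beta / T.
have hbe : beta = e * T by rewrite /e divfK //; apply/negP => /eqP h; rewrite h in hT; lra.
have he : 200%:R * e <= 1 by rewrite /e mulrA ler_pdivrMr // mul1r.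
have he0 : 0 <= e by rewrite /e; apply: divr_ge0; lra.
set P := T ^+ k.+1.
set d := e ^+ k.+1.
have hP : 0 < P by apply: exprn_gt0.
have hd0 : 0 <= d by apply: exprn_ge0.
have hde : d <= e.
  have h1 : e <= 1 by lra.
  have := exprn_ile1 k he0 h1; have := exprn_ge0 k he0; rewrite /d exprS => ? ?; nra.
have hJ : forall j r s, (j + r + s = k.+3)%N ->
    inum (k.+3) ('X^j * ('X^r)%:P * Omega alpha beta ^+ s) =
    (if j is 0 then T^+s - beta^+s else x^+j * T^+s) / x.
  by move=> j r s h; have := @J_val R alpha beta _ _ _ _ h; rewrite /= => <-; rewrite mulfK.
have ex : (k.+2)%:R = x :> R by [].
have en : (k.+3)%:R = x + 1 :> R by rewrite -ex natr1.
have en4 : (k.+4)%:R = x + 1 + 1 :> R by rewrite -en natr1.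
clearbody x.
have hA : inum (k.+3) (Omega alpha beta ^+ k.+3) = (T^+2*P - (e*T)^+2*(d*P))/x.
  rewrite om_split hJ //=; rewrite {1}hbe /P /d !exprS exprMn; ring.
have hD : inum (k.+3) (chern1 R * Omega alpha beta ^+ (k.+3 - 1)) =
    2%:R * (T * P) + (T*P - (e*T)*(d*P))/x.
  rewrite subn1 /= c1_split inumD inumMn !hJ //=; rewrite {1}hbe /P /d !exprS exprMn; field; exact: hx0.
have hB : inum (k.+3) (chern1 R ^+ 2 * Omega alpha beta ^+ (k.+3 - 2)) =
    4%:R * (x * P) + 4%:R * P + (P - d*P)/x.
  rewrite subSS subSS subn0 c1sq_split !inumD !hJ //=; rewrite {1}hbe /P /d exprMn; field; exact: hx0.
have hC : inum (k.+3) (chern2 R k.+3 * Omega alpha beta ^+ (k.+3 - 2)) =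
    2%:R * (x+1) * P - ((x+1)*x/2%:R) * ((P - d*P)/x).
  rewrite subSS subSS subn0 c2_split inumB !inumC !hJ //=; rewrite {1}hbe /P /d exprMn.
  rewrite subn1 /= !natrM en ex; field; exact: hx0.
unfold fnab; rewrite hA hB hC hD natrD en en4.
split; first exact: fpos.
apply: qlem; last exact: fpos.
have hxp : 0 < x by lra.
apply: divr_gt0 => //.
have -> : T ^+ 2 * P - (e * T) ^+ 2 * (d * P) = T^+2 * P * (1 - e * (e * d)) by ring.
have hT2 : 0 < T^+2 * P by apply: mulr_gt0 => //; apply: exprn_gt0.
apply: mulr_gt0 => //.
have h1 : e * d <= e * e by apply: ler_wpM2l.
have h2 : e * e <= e * 1 by apply: ler_wpM2l => //; lra.
have h3 : e * (e * d) <= e * (e * 1) by apply: ler_wpM2l => //; lra.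
lra.
Qed.
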